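(* Let $\omega\ge 2$ and let $\Gamma$ be a finite simple graph that is $\omega$-clique regular and is a non-boring $\mathrm{srg}(n,k,\lambda,\mu)$ with spectrum $k^1, r^f, s^g$ where $r>s$. Then $C_\omega(\Gamma)$ is strongly regular if and only if $s=\frac{-k}{\omega-1}$ or $k=\omega(\omega-1)$. In that case $C_\omega(\Gamma)$ is an \[\mathrm{srg}\left(\frac{nk}{\omega(\omega-1)},\ \omega\left(\frac{k}{\omega-1}-1\right),\ \lambda^*,\ \mu^*\right)\] for some $\lambda^*,\mu^*$, and if moreover $\lambda=\omega-2$, then $\lambda^*=\frac{k}{\omega-1}-2$ and $\mu^*=\mu+\omega-\frac{k}{\omega-1}$.
   Context: A graph is $\omega$-clique regular if it has a nonempty edge set and every edge lies in exactly one clique of order $\omega$. The $\omega$-clique graph $C_\omega(\Gamma)$ has as vertices the cliques of order $\omega$ in $\Gamma$, two distinct ones adjacent iff they have nonempty intersection. A graph is strongly regular with parameters $(n,k,\lambda,\mu)$, $\mathrm{srg}(n,k,\lambda,\mu)$, if it has $n$ vertices, is $k$-regular, adjacent vertices have exactly $\lambda$ common neighbours and distinct non-adjacent vertices have exactly $\mu$ common neighbours. A strongly regular graph is called boring if it has at most two distinct adjacency eigenvalues (disjoint unions of complete graphs of equal size and their complements), and non-boring otherwise; a non-boring srg has exactly three eigenvalues $k>r>s$ with multiplicities $1,f,g$. Spectrum exponents denote multiplicities. *)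

(* Defs.v *)
From HB Require Import structures.
From mathcomp Require Import all_boot all_order all_algebra all_field.
Set Implicit Arguments. Unset Strict Implicit. Unset Printing Implicit Defensive.
Import Order.TTheory GRing.Theory Num.Theory.
Local Open Scope ring_scope.

Section Graphs.
Variable U : finType.

Definition srg_on (V : {set U}) (e : rel U) (n k lam mu : nat) : Prop :=
  [/\ #|V| = n,
      (forall x, x \in V -> #|[set y in V | e x y]| = k),
      (forall x y, x \in V -> y \in V -> x != y -> e x y ->
         #|[set z in V | e x z && e y z]| = lam) &
      (forall x y, x \in V -> y \in V -> x != y -> ~~ e x y ->
         #|[set z in V | e x z && e y z]| = mu)].

Definition is_clique (e : rel U) (A : {set U}) : bool :=
  [forall x in A, forall y in A, (x != y) ==> e x y].

Definition wcliques (e : rel U) (w : nat) : {set {set U}} :=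
  [set A : {set U} | is_clique e A && (#|A| == w)].

Definition clique_regular (e : rel U) (w : nat) : Prop :=
  (exists x y, e x y) /\
  (forall x y, e x y ->
     #|[set A in wcliques e w | (x \in A) && (y \in A)]| = 1%N).

(* adjacency relation of the w-clique graph (on {set U}; its vertex set is wcliques e w) *)
Definition cgraph_rel : rel {set U} :=
  fun A B => (A != B) && (A :&: B != set0).

Definition adjmx (e : rel U) : 'M[algC]_#|U| :=
  \matrix_(i, j) (e (enum_val i) (enum_val j))%:R.

Definition adj_eigenvalue (e : rel U) (a : algC) : Prop := eigenvalue (adjmx e) a.

Definition nonboring (e : rel U) : Prop :=
  exists a b c : algC, adj_eigenvalue e a /\ adj_eigenvalue e b /\ adj_eigenvalue e c /\
                          a != b /\ b != c /\ a != c.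
End Graphs.

(* Main.v *)
Require Import Defs.
From HB Require Import structures.
From mathcomp Require Import all_boot all_order all_algebra all_field.
From mathcomp Require Import ring zify.
Import Order.TTheory GRing.Theory Num.Theory.
Local Open Scope ring_scope.
Set Implicit Arguments. Unset Strict Implicit. Unset Printing Implicit Defensive.

Section Adj.
Variables (U : finType) (A : {pred U}).

Lemma card_ord_pred (P : pred U) :
  #|[pred i : 'I_#|A| | P (enum_val i)]| = #|[set z in A | P z]|.
Proof.
rewrite -(sum1_card [pred i : 'I_#|A| | P (enum_val i)]).
rewrite -(sum1_card (mem [set z in A | P z])).
have := @big_enum_val_cond _ addn 0%N _ A P (fun _ => 1%N).
rewrite /= => E.
transitivity (\sum_(x in A | P x) 1)%N; last first.
  by apply: eq_bigl => z; rewrite !inE.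
by rewrite E.
Qed.

Lemma sum_ind_card (P : pred U) :
  \sum_(i < #|A|) ((P (enum_val i))%:R : algC) = #|[set z in A | P z]|%:R.
Proof.
rewrite -card_ord_pred -(sum1_card [pred i : 'I_#|A| | P (enum_val i)]) natr_sum big_mkcond /=.
rewrite [RHS]big_mkcond /=; apply: eq_bigr => i _; rewrite inE; by case: (P _).
Qed.

Variable e : rel U.

Definition adjA : 'M[algC]_#|A| := \matrix_(i, j) (e (enum_val i) (enum_val j))%:R.

Lemma adjA_sqr i j : (adjA *m adjA) i j =
  #|[set z in A | e (enum_val i) z && e z (enum_val j)]|%:R.
Proof.
rewrite !mxE -(sum_ind_card (fun z => e (enum_val i) z && e z (enum_val j))).
by apply: eq_bigr => l _; rewrite !mxE -natrM mulnb.
Qed.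

Lemma adjA_J p i j : (adjA *m (const_mx 1 : 'M_(#|A|, p))) i j =
  #|[set z in A | e (enum_val i) z]|%:R.
Proof.
rewrite !mxE -(sum_ind_card (fun z => e (enum_val i) z)).
by apply: eq_bigr => l _; rewrite !mxE mulr1.
Qed.

Definition srgA (k l m : nat) : Prop :=
  [/\ (forall x, x \in A -> #|[set y in A | e x y]| = k),
      (forall x y, x \in A -> y \in A -> x != y -> e x y ->
         #|[set z in A | e x z && e y z]| = l) &
      (forall x y, x \in A -> y \in A -> x != y -> ~~ e x y ->
         #|[set z in A | e x z && e y z]| = m)].

Hypotheses (esym : symmetric e) (eirr : irreflexive e).

Lemma adjA_Jk p k : (forall x, x \in A -> #|[set y in A | e x y]| = k) ->
  adjA *m (const_mx 1 : 'M_(#|A|, p)) = k%:R *: const_mx 1.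
Proof.
move=> H; apply/matrixP => i j; rewrite adjA_J H ?enum_valP //.
by rewrite !mxE mulr1.
Qed.

Lemma srgA_mx k l m : srgA k l m ->
  adjA *m adjA = k%:R%:M + l%:R *: adjA + m%:R *: (const_mx 1 - 1%:M - adjA).
Proof.
case=> Hk Hl Hm; apply/matrixP => i j; rewrite adjA_sqr !mxE.
have eij : (i == j) = (enum_val i == enum_val j :> U).
  by apply/eqP/eqP => [->//|/enum_val_inj].
case: eqP eij => [<- _|/eqP nij].
  rewrite /= eirr mulr0 subr0 mulr1n subrr mulr0 !addr0.
  have -> : [set z in A | e (enum_val i) z && e z (enum_val i)] =
            [set y in A | e (enum_val i) y].
    by apply/setP => z; rewrite !inE [e z _]esym andbb.
  by rewrite Hk ?enum_valP.
move=> eij; rewrite /= mulr0n add0r subr0.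
have -> : [set z in A | e (enum_val i) z && e z (enum_val j)] =
          [set z in A | e (enum_val i) z && e (enum_val j) z].
  by apply/setP => z; rewrite !inE [e z _]esym.
have nij' : enum_val i != enum_val j :> U by rewrite -eij.
case E: (e (enum_val i) (enum_val j)).
  by rewrite Hl ?enum_valP // mulr1 subrr mulr0 addr0.
by rewrite Hm ?enum_valP ?E // mulr0 subr0 mulr1 add0r.
Qed.

Lemma mx_srgA (k l m : nat) (x y z : algC) :
  adjA *m (const_mx 1 : 'M_(#|A|, #|A|)) = k%:R *: const_mx 1 ->
  adjA *m adjA = x%:M + y *: adjA + z *: const_mx 1 ->
  (forall u v, u \in A -> v \in A -> u != v -> e u v -> y + z = l%:R) ->
  (forall u v, u \in A -> v \in A -> u != v -> ~~ e u v -> z = m%:R) ->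
  srgA k l m.
Proof.
move=> HJ H2 Hl Hm; split.
- move=> u uA; apply/eqP; rewrite -(eqr_nat algC).
  have := congr1 (fun M : 'M[algC]_#|A| => M (enum_rank_in uA u) (enum_rank_in uA u)) HJ.
  by rewrite adjA_J enum_rankK_in // !mxE mulr1 => ->.
- move=> u v uA vA uv euv; apply/eqP; rewrite -(eqr_nat algC).
  have := congr1 (fun M : 'M[algC]_#|A| => M (enum_rank_in uA u) (enum_rank_in uA v)) H2.
  rewrite adjA_sqr !enum_rankK_in // !mxE !enum_rankK_in // euv.
  have -> : (enum_rank_in uA u == enum_rank_in uA v) = false.
    by apply/eqP => /(congr1 enum_val); rewrite !enum_rankK_in //; apply/eqP.
  rewrite mulr0n add0r mulr1 -(Hl u v) //.
  have -> : [set z in A | e u z && e z v] = [set z0 in A | e u z0 && e v z0].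
    by apply/setP => t; rewrite !inE [e t _]esym.
  by move=> ->; rewrite mulr1.
- move=> u v uA vA uv euv; apply/eqP; rewrite -(eqr_nat algC).
  have := congr1 (fun M : 'M[algC]_#|A| => M (enum_rank_in uA u) (enum_rank_in uA v)) H2.
  rewrite adjA_sqr !enum_rankK_in // !mxE !enum_rankK_in // (negbTE euv).
  have -> : (enum_rank_in uA u == enum_rank_in uA v) = false.
    by apply/eqP => /(congr1 enum_val); rewrite !enum_rankK_in //; apply/eqP.
  rewrite mulr0n add0r -(Hm u v) //.
  have -> : [set z in A | e u z && e z v] = [set z0 in A | e u z0 && e v z0].
    by apply/setP => t; rewrite !inE [e t _]esym.
  by move=> ->; rewrite mulr1 mulr0n mulr0 add0r.
Qed.

Lemma mx_srgA_ex (k : nat) (x y z : algC) :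
  adjA *m (const_mx 1 : 'M_(#|A|, #|A|)) = k%:R *: const_mx 1 ->
  adjA *m adjA = x%:M + y *: adjA + z *: const_mx 1 ->
  exists l m, srgA k l m.
Proof.
move=> HJ H2.
have entry u v (uA : u \in A) (vA : v \in A) : u != v ->
    #|[set t in A | e u t && e v t]|%:R = (e u v)%:R * y + z.
  move=> uv.
  have := congr1 (fun M : 'M[algC]_#|A| => M (enum_rank_in uA u) (enum_rank_in uA v)) H2.
  rewrite adjA_sqr !enum_rankK_in // !mxE !enum_rankK_in //.
  have -> : (enum_rank_in uA u == enum_rank_in uA v) = false.
    by apply/eqP => /(congr1 enum_val); rewrite !enum_rankK_in //; apply/eqP.
  rewrite mulr0n add0r mulr1.
  have -> : [set z in A | e u z && e z v] = [set z0 in A | e u z0 && e v z0].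
    by apply/setP => t; rewrite !inE [e t _]esym.
  by move=> ->; rewrite mulrC.
pose PL := [exists u, exists v, [&& u \in A, v \in A, u != v & e u v]].
pose PM := [exists u, exists v, [&& u \in A, v \in A, u != v & ~~ e u v]].
have [l Hl] : exists l : nat, forall u v, u \in A -> v \in A -> u != v -> e u v -> y + z = l%:R.
  case: (boolP PL) => [/existsP[u0 /existsP[v0 /and4P[u0A v0A uv0 e0]]]|nPL].
    exists #|[set t in A | e u0 t && e v0 t]|.
    by move=> u v uA vA uv euv; rewrite entry // e0 /= mul1r.
  exists 0%N => u v uA vA uv euv; exfalso; move/negP: nPL; apply.
  by apply/existsP; exists u; apply/existsP; exists v; rewrite uA vA uv euv.
have [m Hm] : exists m : nat, forall u v, u \in A -> v \in A -> u != v -> ~~ e u v -> z = m%:R.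
  case: (boolP PM) => [/existsP[u0 /existsP[v0 /and4P[u0A v0A uv0 e0]]]|nPM].
    exists #|[set t in A | e u0 t && e v0 t]|.
    move=> u v uA vA uv euv; by rewrite entry // (negbTE e0) /= mul0r add0r.
  exists 0%N => u v uA vA uv euv; exfalso; move/negP: nPM; apply.
  by apply/existsP; exists u; apply/existsP; exists v; rewrite uA vA uv euv.
by exists l, m; apply: mx_srgA HJ H2 Hl Hm.
Qed.

End Adj.

Notation J := (const_mx (1 : algC)).

Lemma mulJJ a b c : (const_mx 1 : 'M[algC]_(a, b)) *m (const_mx 1 : 'M_(b, c)) = b%:R *: J.
Proof.
apply/matrixP => i j; rewrite !mxE (eq_bigr (fun _ => 1)); last by move=> *; rewrite !mxE mulr1.
by rewrite sumr_const card_ord mulr1.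
Qed.

Lemma EV_J p q (M : 'M[algC]_p) (v : 'rV_p) a kk :
  v *m M = a *: v -> M *m (const_mx 1 : 'M_(p, q)) = kk *: J -> a != kk ->
  v *m (const_mx 1 : 'M_(p, q)) = 0.
Proof.
move=> vM MJ akk.
have := mulmxA v M (const_mx 1 : 'M_(p, q)).
rewrite MJ vM -scalemxAl -scalemxAr => /eqP.
rewrite -subr_eq0 -scalerBl scaler_eq0 subr_eq0 eq_sym (negbTE akk) /=.
by move=> /eqP.
Qed.

Lemma EV_scal p (v : 'rV[algC]_p) b b' :
  v != 0 -> b *: v = b' *: v -> b = b'.
Proof.
move=> v0 /eqP; rewrite -subr_eq0 -scalerBl scaler_eq0 (negbTE v0) orbF subr_eq0.
by move/eqP.
Qed.

Lemma EV_sq p (M : 'M[algC]_p) (v : 'rV_p) a :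
  v *m M = a *: v -> v *m (M *m M) = a ^+ 2 *: v.
Proof. by move=> vM; rewrite mulmxA vM -scalemxAl vM scalerA expr2. Qed.

Lemma real_sym_sqr0 p (D : 'M[algC]_p) :
  (forall i j, D i j \is Num.real) -> D^T = D -> D *m D = 0 -> D = 0.
Proof.
move=> Dr DT DD; apply/matrixP => i j; rewrite mxE.
have := congr1 (fun M : 'M[algC]_p => M i i) DD; rewrite !mxE.
have -> : \sum_l D i l * D l i = \sum_l `|D i l| ^+ 2.
  apply: eq_bigr => l _.
  have -> : D l i = D i l by rewrite -[in LHS]DT mxE.
  by rewrite real_normK // expr2.
move=> H.
have := @psumr_eq0P _ _ xpredT (fun l => `|D i l| ^+ 2) (fun l _ => exprn_ge0 2 (normr_ge0 _)) H j isT.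
by move/eqP; rewrite sqrf_eq0 normr_eq0 => /eqP.
Qed.

Section G.
Variables (T : finType) (e : rel T) (w : nat).
Hypotheses (w2 : (2 <= w)%N) (esym : symmetric e) (eirr : irreflexive e)
  (creg : clique_regular e w).
Local Notation W := (wcliques e w).

Lemma cardW A : A \in W -> #|A| = w.
Proof. by rewrite inE => /andP[_ /eqP]. Qed.

Lemma clique_adj A x y : A \in W -> x \in A -> y \in A -> x != y -> e x y.
Proof.
rewrite inE => /andP[/forall_inP H _] xA yA xy.
by have /forall_inP/(_ y yA)/implyP := H x xA; apply.
Qed.

Lemma uniq_clique A B x y : A \in W -> B \in W -> x \in A -> y \in A ->
  x \in B -> y \in B -> x != y -> A = B.
Proof.
move=> AW BW xA yA xB yB xy.
have /eqP/cards1P[C HC] := creg.2 x y (clique_adj AW xA yA xy).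
have : A \in [set C] by rewrite -HC inE AW xA yA.
have : B \in [set C] by rewrite -HC inE BW xB yB.
by rewrite !inE => /eqP-> /eqP->.
Qed.

Lemma inter_le1 A B : A \in W -> B \in W -> A != B -> (#|A :&: B| <= 1)%N.
Proof.
move=> AW BW AB; rewrite leqNgt; apply/negP => /card_gt1P[x [y []]].
rewrite !inE => /andP[xA xB] /andP[yA yB] xy.
by move/eqP: AB; apply; apply: (uniq_clique AW BW xA yA xB yB xy).
Qed.

Lemma edge_clique x y : e x y -> exists A, [/\ A \in W, x \in A & y \in A].
Proof.
move=> exy; have H := creg.2 x y exy.
have /card_gt0P[A] : (0 < #|[set A in W | (x \in A) && (y \in A)]|)%N by rewrite H.
by rewrite inE => /andP[AW /andP[xA yA]]; exists A.
Qed.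

Definition cnt x := #|[set A in W | x \in A]|.

Lemma cnt_deg x : (cnt x * w.-1 = #|[set y | e x y]|)%N.
Proof.
rewrite -sum1dep_card.
rewrite (eq_bigr (fun y => \sum_(A | (A \in W) && ((x \in A) && (y \in A))) 1)%N); last first.
  by move=> y exy; rewrite sum1dep_card creg.2.
rewrite (exchange_big_dep (fun A => (A \in W) && (x \in A))); last first.
  by move=> y A _ /andP[-> /andP[-> _]].
rewrite /cnt -sum1dep_card big_distrl /=.
apply: eq_bigr => A /andP[AW xA]; rewrite mul1n sum1dep_card.
have -> : [set y | e x y && [&& A \in W, x \in A & y \in A]] = A :\ x.
  have AW2 := AW; rewrite inE in AW2; apply/setP => y; rewrite !inE AW2 xA /=.
  case: (boolP (y \in A)) => yA; rewrite ?andbF ?andbT //=.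
  case: (eqVneq y x) => [->|yx]; first by rewrite eirr.
  by rewrite (clique_adj AW xA yA) // eq_sym.
by have := cardsD1 x A; rewrite xA cardW // => ->.
Qed.


Variable c : nat.
Hypothesis Hc : forall x, cnt x = c.

Definition Nmx : 'M[algC]_(#|T|, #|W|) :=
  \matrix_(i, j) ((@enum_val T xpredT i) \in (enum_val j : {set T}))%:R.
Definition Bmx := adjA W (@cgraph_rel T).

Lemma enumW (j : 'I_#|W|) : (enum_val j : {set T}) \in W.
Proof. exact: enum_valP. Qed.

Lemma NNt : Nmx *m Nmx^T = adjmx e + c%:R%:M.
Proof.
apply/matrixP => i j; rewrite !mxE.
set x := @enum_val T xpredT i; set y := @enum_val T xpredT j.
rewrite (eq_bigr (fun l : 'I_#|W| => ((fun L : {set T} => (x \in L) && (y \in L)) (enum_val l))%:R));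
  last by move=> l _; rewrite !mxE -natrM mulnb.
apply: (eq_trans (sum_ind_card W (fun L : {set T} => (x \in L) && (y \in L)))).
have eij : (i == j) = (x == y).
  by rewrite /x /y; apply/eqP/eqP => [->//|/enum_val_inj].
rewrite eij; case: (eqVneq x y) => [<-|xy].
  rewrite eirr add0r mulr1n -(Hc x); congr (_%:R); apply: eq_card => L.
  by rewrite !inE andbb.
rewrite mulr0n addr0.
case E: (e x y).
  by rewrite (creg.2 x y E).
have -> : [set z in W | (x \in z) && (y \in z)] = set0.
  apply/setP => L; rewrite !inE; apply/negP => /andP[LW /andP[xL yL]].
  by move: E; rewrite (@clique_adj L x y ltac:(by rewrite inE) xL yL xy).
by rewrite cards0.
Qed.

Lemma NtN : Nmx^T *m Nmx = Bmx + w%:R%:M.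
Proof.
apply/matrixP => i j; rewrite !mxE.
set L1 : {set T} := enum_val i; set L2 : {set T} := enum_val j.
rewrite (eq_bigr (fun l : 'I_#|T| => ((fun z : T => (z \in L1) && (z \in L2)) (@enum_val T xpredT l))%:R));
  last by move=> l _; rewrite !mxE -natrM mulnb.
apply: (eq_trans (sum_ind_card xpredT (fun z : T => (z \in L1) && (z \in L2)))).
have -> : #|[set z in xpredT | (z \in L1) && (z \in L2)]| = #|L1 :&: L2|.
  by apply: eq_card => z; rewrite !inE.
have eij : (i == j) = (L1 == L2).
  by rewrite /L1 /L2; apply/eqP/eqP => [->//|/enum_val_inj].
rewrite eij /cgraph_rel; case: (eqVneq L1 L2) => [<-|L12].
  by rewrite setIid cardW ?enumW //= add0r.
rewrite mulr0n addr0 /=.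
have := inter_le1 (enumW i) (enumW j) L12; rewrite -/L1 -/L2.
case: (eqVneq (L1 :&: L2) set0) => [->|ne]; first by rewrite cards0.
move=> le1; have : (0 < #|L1 :&: L2|)%N by rewrite card_gt0.
by move=> gt0; have -> : #|L1 :&: L2| = 1%N by apply/eqP; rewrite eqn_leq le1 gt0.
Qed.

Lemma NJ p : Nmx *m (const_mx 1 : 'M_(#|W|, p)) = c%:R *: J.
Proof.
apply/matrixP => i j; rewrite !mxE mulr1.
set x := @enum_val T xpredT i.
rewrite (eq_bigr (fun l : 'I_#|W| => ((fun L : {set T} => (x \in L)) (enum_val l))%:R));
  last by move=> l _; rewrite !mxE mulr1.
by apply: (eq_trans (sum_ind_card W (fun L : {set T} => (x \in L)))); rewrite -(Hc x).
Qed.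

Lemma JN p : (const_mx 1 : 'M_(p, #|T|)) *m Nmx = w%:R *: J.
Proof.
apply/matrixP => i j; rewrite !mxE mulr1.
set L : {set T} := enum_val j.
rewrite (eq_bigr (fun l : 'I_#|T| => ((fun z : T => (z \in L)) (@enum_val T xpredT l))%:R));
  last by move=> l _; rewrite !mxE mul1r.
apply: (eq_trans (sum_ind_card xpredT (fun z : T => (z \in L)))).
rewrite -(cardW (enumW j)); congr (_%:R).
by apply: eq_card => z; rewrite !inE.
Qed.

End G.

Lemma srg_onE (U : finType) (e : rel U) V n k l m :
  srg_on V e n k l m <-> #|V| = n /\ srgA V e k l m.
Proof. by split; [case=> *; split | case=> ? [] *; split]. Qed.

Lemma srgTE (U : finType) (e : rel U) k l m :
  srgA [set: U] e k l m -> srgA xpredT e k l m.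
Proof.
case=> H1 H2 H3; split.
- move=> x _; rewrite -(H1 x) ?inE //; apply: eq_card => y; rewrite !inE //.
- move=> x y _ _ xy exy; rewrite -(H2 x y) ?inE //; apply: eq_card => z; rewrite !inE //.
- move=> x y _ _ xy exy; rewrite -(H3 x y) ?inE //; apply: eq_card => z; rewrite !inE //.
Qed.

Lemma two_vals (P : algC -> Prop) u v :
  (exists a b c : algC, P a /\ P b /\ P c /\ a != b /\ b != c /\ a != c) ->
  (forall a, P a -> a = u \/ a = v) -> False.
Proof.
move=> [a [b [c [Pa [Pb [Pc [ab [bc ac]]]]]]]] H.
move: ab bc ac; case: (H a Pa) => ->; case: (H b Pb) => ->;
  case: (H c Pc) => ->; by rewrite ?eqxx.
Qed.

Lemma vieta (x y p q : algC) :
  x ^+ 2 = p * x + q -> y ^+ 2 = p * y + q -> x != y -> x + y = p.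
Proof.
move=> Hx Hy xy; have : (x - y) * (x + y - p) = 0.
  by transitivity (x ^+ 2 - y ^+ 2 - p * x + p * y); [ring | rewrite Hx Hy; ring].
by move/eqP; rewrite mulf_eq0 subr_eq0 (negbTE xy) /= subr_eq0 => /eqP.
Qed.

Lemma three_roots (a b d p q : algC) :
  a ^+ 2 = p * a + q -> b ^+ 2 = p * b + q -> d ^+ 2 = p * d + q ->
  a != b -> b != d -> a != d -> False.
Proof.
move=> Ha Hb Hd ab bd ad.
have E x y : x ^+ 2 = p * x + q -> y ^+ 2 = p * y + q -> x != y -> x + y = p.
  move=> Hx Hy xy; have : (x - y) * (x + y - p) = 0.
    by transitivity (x ^+ 2 - y ^+ 2 - p * x + p * y); [ring | rewrite Hx Hy; ring].
  by move/eqP; rewrite mulf_eq0 subr_eq0 (negbTE xy) /= subr_eq0 => /eqP.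
have h1 := E a b Ha Hb ab; have h2 := E a d Ha Hd ad.
move/eqP: bd; apply; by apply: (addrI a); rewrite h1 h2.
Qed.

Section Main.
Variables (w : nat) (T : finType) (e : rel T) (n k lam mu : nat) (r s : algC).
Hypotheses (w2 : (2 <= w)%N) (esym : symmetric e) (eirr : irreflexive e)
  (creg : clique_regular e w) (srg : srg_on [set: T] e n k lam mu)
  (nb : nonboring e)
  (spec : forall a : algC, adj_eigenvalue e a <-> (a = k%:R \/ a = r \/ a = s))
  (sr : s < r).

Local Notation W := (wcliques e w).
Local Notation A := (adjmx e).

Lemma nT : #|T| = n.
Proof. by case/srg_onE: srg => <- _; apply: eq_card => x; rewrite !inE. Qed.

Lemma srgT : srgA xpredT e k lam mu.
Proof. by case/srg_onE: srg => _ /srgTE. Qed.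

Lemma degk x : #|[set y | e x y]| = k.
Proof.
case: srgT => H _ _; rewrite -(H x) //; apply: eq_card => y; rewrite !inE //.
Qed.

Definition cc := (k %/ w.-1)%N.

Lemma cntc x : cnt e w x = cc.
Proof.
rewrite /cc -(degk x) -(cnt_deg eirr creg) mulnK //; lia.
Qed.

Lemma kc : k = (cc * w.-1)%N.
Proof.
case: creg => [[x [y _]] _]; rewrite -(degk x) -(cnt_deg eirr creg) cntc //.
Qed.

Lemma Aid : A *m A = k%:R%:M + lam%:R *: A + mu%:R *: (J - 1%:M - A).
Proof. exact: (srgA_mx esym eirr srgT). Qed.

Lemma AJ p : A *m (const_mx 1 : 'M_(#|T|, p)) = k%:R *: J.
Proof. by apply: adjA_Jk; case: srgT. Qed.

Lemma distinct_krs : [/\ k%:R != r, k%:R != s & r != s].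
Proof.
have rs : r != s by rewrite eq_sym lt_eqF.
split=> //; apply/negP => /eqP E.
- apply: (two_vals nb (u := k%:R) (v := s)) => a /spec; rewrite -E; tauto.
- apply: (two_vals nb (u := k%:R) (v := r)) => a /spec; rewrite -E; tauto.
Qed.

Lemma quad a : adj_eigenvalue e a -> a != k%:R ->
  a ^+ 2 = (lam%:R - mu%:R) * a + (k%:R - mu%:R).
Proof.
move=> /eigenvalueP[v vA v0] ak.
have vJ : v *m (const_mx 1 : 'M_(#|T|, #|T|)) = 0 by apply: (EV_J vA (AJ _)).
apply: (EV_scal v0); rewrite -(EV_sq vA) Aid.
rewrite !mulmxDr -!scalemxAr !mulmxBr mul_mx_scalar vA vJ mulmx1.
apply/rowP => j; rewrite !mxE; ring.
Qed.


Lemma lam_lt_k : (lam < k)%N.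
Proof.
case: creg => [[x [y exy]] _].
have xy : x != y by apply/eqP => E; move: exy; rewrite E eirr.
case: srgT => _ H _; rewrite -(H x y) // -(degk x).
have -> : #|[set y0 | e x y0]| = #|[set y0 | e x y0] :\ y|.+1.
  by rewrite (cardsD1 y) inE exy.
rewrite ltnS; apply: subset_leq_card; apply/subsetP => z; rewrite !inE.
by case/and3P => _ -> eyz; rewrite andbT; apply/eqP => E; move: eyz; rewrite E eirr.
Qed.


Lemma m_gt0 : (0 < #|W|)%N.
Proof.
case: creg => [[x [y exy]] _]; have [L [LW _ _]] := edge_clique creg exy.
by apply/card_gt0P; exists L.
Qed.

Lemma n_gt0 : (0 < #|T|)%N.
Proof. by case: creg => [[x _] _]; apply/card_gt0P; exists x. Qed.

Lemma cc_gt0 : (0 < cc)%N.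
Proof. have := lam_lt_k; rewrite kc; case: cc => //; lia. Qed.

Local Notation N := (Nmx e w).
Local Notation Bm := (Bmx e w).

Lemma NNtc : N *m N^T = A + cc%:R%:M.
Proof. exact: (NNt eirr creg cntc). Qed.

Lemma cc_neq1 : cc != 1%N.
Proof.
apply/eqP => c1.
have B0 : Bm = 0.
  apply/matrixP => i j; rewrite !mxE /cgraph_rel.
  case: (eqVneq (enum_val i : {set T}) (enum_val j)) => //= Lij.
  case: (set_0Vmem (enum_val i :&: enum_val j : {set T})) => [->|[x]]; first by rewrite eqxx.
  rewrite inE => /andP[xi xj].
  have : (1 < cnt e w x)%N.
    apply/card_gt1P; exists (enum_val i), (enum_val j).
    by move: (enumW i) (enumW j); rewrite !inE xi xj => -> ->; rewrite Lij.
  by rewrite cntc c1.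
have NtNw : N^T *m N = w%:R%:M by rewrite (NtN creg) B0 add0r.
have MM : (A + 1%:M) *m (A + 1%:M) = w%:R *: (A + 1%:M).
  have -> : A + 1%:M = N *m N^T by rewrite NNtc c1.
  by rewrite mulmxA -(mulmxA N) NtNw mul_mx_scalar -scalemxAl.
apply: (two_vals nb (u := -1) (v := w%:R - 1)) => a /eigenvalueP[v vA v0].
have vA1 : v *m (A + 1%:M) = (a + 1) *: v by rewrite mulmxDr vA mulmx1 scalerDl scale1r.
have := EV_sq vA1; rewrite MM -scalemxAr vA1 scalerA => /(EV_scal v0) H.
have : (a + 1) * (a + 1 - w%:R) = 0.
  by rewrite mulrBr -expr2 -H mulrC subrr.
move/eqP; rewrite mulf_eq0 => /orP[] /eqP E.
  by left; apply/eqP; rewrite -addr_eq0 E.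
by right; apply/eqP; rewrite -subr_eq0; apply/eqP; rewrite -E; ring.
Qed.


Lemma eig_r : adj_eigenvalue e r. Proof. by apply/spec; tauto. Qed.
Lemma eig_s : adj_eigenvalue e s. Proof. by apply/spec; tauto. Qed.

Lemma s_val : s = lam%:R - mu%:R - r.
Proof.
have [kr ks rs] := distinct_krs.
have Qr := quad eig_r (ltac:(by rewrite eq_sym)).
have Qs := quad eig_s (ltac:(by rewrite eq_sym)).
have := vieta Qr Qs rs; move=> <-; ring.
Qed.

Lemma r_neq : r != - cc%:R.
Proof.
apply/eqP => rc.
have [kr ks rs] := distinct_krs.
have Qr := quad eig_r (ltac:(by rewrite eq_sym)); rewrite rc in Qr.
have E1 : (cc * cc + lam * cc + mu = k + mu * cc)%N.
  apply/eqP; rewrite -(eqr_nat algC) !natrD !natrM; apply/eqP.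
  apply/eqP; rewrite -subr_eq0; apply/eqP.
  transitivity ((- cc%:R) ^+ 2 - ((lam%:R - mu%:R) * (- cc%:R) + (k%:R - mu%:R)) : algC).
    ring.
  by rewrite Qr subrr.
have E2 : (lam + cc + cc < mu)%N.
  rewrite -(ltr_nat algC) -subr_gt0.
  have -> : (mu%:R - (lam + cc + cc)%:R : algC) = r - s by rewrite s_val rc !natrD; ring.
  by rewrite subr_gt0.
have := lam_lt_k; have := cc_neq1; have := cc_gt0; move: E1 E2 => /=.
move=> E1 E2 h1 /eqP h2 h3. nia.
Qed.


Lemma count_mw : (#|W| * w = #|T| * cc)%N.
Proof.
have E := mulmxA (const_mx 1 : 'M[algC]_(1, #|T|)) N (const_mx 1 : 'M_(#|W|, 1)).
rewrite JN (NJ cntc) -scalemxAl -scalemxAr !mulJJ !scalerA in E.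
have := congr1 (fun M : 'M[algC]_1 => M 0 0) E; rewrite !mxE !mulr1 -!natrM.
by move/eqP; rewrite eqr_nat => /eqP; lia.
Qed.

Lemma PJ p : N^T *m N *m (const_mx 1 : 'M_(#|W|, p)) = (cc * w)%:R *: J.
Proof.
rewrite -mulmxA (NJ cntc) -scalemxAr.
have -> : N^T *m (const_mx 1 : 'M_(#|T|, p)) = w%:R *: J.
  by apply: trmx_inj; rewrite trmx_mul trmxK trmx_const JN linearZ /= trmx_const.
by rewrite scalerA natrM mulrC.
Qed.

Lemma BmJ : Bm *m (const_mx 1 : 'M_(#|W|, #|W|)) = ((cc * w)%:R - w%:R) *: J.
Proof.
have := PJ #|W|; rewrite (NtN creg) mulmxDl mul_scalar_mx => /(canRL (addrK _)) ->.
by rewrite scalerBl.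
Qed.

Lemma cg_sym : symmetric (@cgraph_rel T).
Proof. by move=> X Y; rewrite /cgraph_rel eq_sym setIC. Qed.
Lemma cg_irr : irreflexive (@cgraph_rel T).
Proof. by move=> X; rewrite /cgraph_rel eqxx. Qed.

Lemma lift_eig a : adj_eigenvalue e a -> a != - cc%:R ->
  exists2 z : 'rV_#|W|, z *m Bm = (a + cc%:R - w%:R) *: z & z != 0.
Proof.
move=> /eigenvalueP[v vA v0] ac.
have vNN : v *m N *m N^T = (a + cc%:R) *: v.
  by rewrite -mulmxA NNtc mulmxDr vA mul_mx_scalar scalerDl.
exists (v *m N).
  have : v *m N *m (N^T *m N) = (a + cc%:R) *: (v *m N) by rewrite mulmxA vNN scalemxAl.
  rewrite (NtN creg) mulmxDr mul_mx_scalar => /(canRL (addrK _)) ->.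
  by rewrite -scalerBl.
apply/eqP => z0; move: vNN; rewrite z0 mul0mx => /(fun H => Logic.eq_sym H)/eqP.
rewrite scaler_eq0 (negbTE v0) orbF addr_eq0; by rewrite (negbTE ac).
Qed.

Lemma quadB k' l' m' (z : 'rV_#|W|) th :
  Bm *m Bm = k'%:R%:M + l'%:R *: Bm + m'%:R *: (J - 1%:M - Bm) ->
  z *m Bm = th *: z -> z != 0 -> th != (cc * w)%:R - w%:R ->
  th ^+ 2 = (l'%:R - m'%:R) * th + (k'%:R - m'%:R).
Proof.
move=> BB zB z0 thk.
have zJ : z *m (const_mx 1 : 'M_(#|W|, #|W|)) = 0 by apply: (EV_J zB BmJ).
apply: (EV_scal z0); rewrite -(EV_sq zB) BB.
rewrite !mulmxDr -!scalemxAr !mulmxBr mul_mx_scalar zB zJ mulmx1.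
apply/rowP => j; rewrite !mxE; ring.
Qed.

Lemma notc_eig : s != - cc%:R -> ~ adj_eigenvalue e (- cc%:R).
Proof.
move=> sc /spec[|[]] E.
- have : (k + cc)%N == 0%N by rewrite -(eqr_nat algC) natrD -E addNr.
  by have := cc_gt0; rewrite addn_eq0 => /lt0n_neq0/negbTE ->; rewrite andbF.
- by move/eqP: r_neq; apply.
- by move/eqP: sc; apply.
Qed.

Lemma NNt_unit : s != - cc%:R -> N *m N^T \in unitmx.
Proof.
move=> sc; have := notc_eig sc; rewrite /adj_eigenvalue /eigenvalue /eigenspace.
move/negP; rewrite negbK kermx_eq0 row_free_unit.
by rewrite NNtc raddfN /= opprK.
Qed.

Lemma converse : (exists n' k' l' m', srg_on W (@cgraph_rel T) n' k' l' m') ->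
  s = - cc%:R \/ cc = w.
Proof.
move=> [n' [k' [l' [m' /srg_onE [_ H]]]]].
case: (eqVneq s (- cc%:R)) => [->|sc]; first by left.
case: (eqVneq cc w) => [->|cw]; first by right.
exfalso.
have BB := srgA_mx cg_sym cg_irr H.
have [kr ks rs] := distinct_krs.
have Un := NNt_unit sc.
have nm : (#|T| <= #|W|)%N.
  rewrite -{1}(mxrank_unit Un); apply: leq_trans (mxrankM_maxl _ _) (rank_leq_col _).
have nm' : #|T| != #|W|.
  apply/eqP => E; move: cw; have := count_mw; rewrite E => /eqP.
  by rewrite eqn_mul2l (negbTE (lt0n_neq0 m_gt0)) /= eq_sym => ->.
have nlt : (#|T| < #|W|)%N by rewrite ltn_neqAle nm' nm.
have : ~~ (N^T *m N \in unitmx).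
  rewrite -row_free_unit /row_free; apply/negP => E.
  have h := leq_trans (mxrankM_maxr N^T N) (rank_leq_row N); rewrite (eqP E) in h.
  by move: nlt; rewrite ltnNge h.
rewrite -row_free_unit -kermx_eq0 => /negP Hk.
have /eigenvalueP[u uP u0] : eigenvalue (N^T *m N) 0.
  rewrite /eigenvalue /eigenspace (raddf0 (@scalar_mx _ _)) subr0; by apply/negP.
have uB : u *m Bm = (- w%:R) *: u.
  move: uP; rewrite (NtN creg) mulmxDr mul_mx_scalar scale0r => /eqP.
  by rewrite addr_eq0 => /eqP ->; rewrite scaleNr.
have [zr zrB zr0] := lift_eig eig_r r_neq.
have [zs zsB zs0] := lift_eig eig_s sc.
have kw : (cc * w)%:R - w%:R = k%:R + cc%:R - w%:R :> algC.
  rewrite kc; have : (0 < w)%N by lia.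
  by case: (w) => // w' _; rewrite /= mulnS natrD; ring.
have shift a b : a != b -> a + cc%:R - w%:R != b + cc%:R - w%:R.
  by move=> ab; apply: contra_neq ab => /addIr /addIr.
have mw : - w%:R = - cc%:R + cc%:R - w%:R :> algC by ring.
have ck : - cc%:R != k%:R :> algC.
  apply/eqP => E; have : (k + cc)%N == 0%N by rewrite -(eqr_nat algC) natrD -E addNr.
  by have := cc_gt0; rewrite addn_eq0 => /lt0n_neq0/negbTE ->; rewrite andbF.
have rc' : - cc%:R != r by rewrite eq_sym r_neq.
have sc' : - cc%:R != s by rewrite eq_sym.
have kr' : r != k%:R by rewrite eq_sym.
have ks' : s != k%:R by rewrite eq_sym.
rewrite mw in uB.
apply: (three_roots (quadB BB uB u0 _) (quadB BB zrB zr0 _) (quadB BB zsB zs0 _));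
  rewrite ?kw; exact: shift.
Qed.



Lemma sqr_shift p (Y : 'M[algC]_p) a :
  (Y + a%:M) *m (Y + a%:M) = Y *m Y + (a *+ 2) *: Y + (a ^+ 2)%:M.
Proof.
rewrite mulmxDl !mulmxDr mul_mx_scalar mul_scalar_mx -scalar_mxM.
by rewrite -addrA [X in _ + X]addrA -scalerDl mulr2n expr2 addrA.
Qed.

Lemma Pt : (N^T *m N)^T = N^T *m N.
Proof. by rewrite trmx_mul trmxK. Qed.

Lemma NtJN : N^T *m (const_mx 1 : 'M_(#|T|, #|T|)) *m N = (w ^ 2)%:R *: J.
Proof.
have -> : N^T *m (const_mx 1 : 'M_(#|T|, #|T|)) = w%:R *: J.
  by apply: trmx_inj; rewrite trmx_mul trmxK trmx_const JN linearZ /= trmx_const.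
by rewrite -scalemxAl JN scalerA -natrM expnS expn1.
Qed.

Lemma A'sq : (A + cc%:R%:M) *m (A + cc%:R%:M) =
  (lam%:R - mu%:R + cc%:R *+ 2) *: (A + cc%:R%:M)
  + (k%:R - mu%:R - cc%:R ^+ 2 - cc%:R * lam%:R + cc%:R * mu%:R)%:M + mu%:R *: J.
Proof.
rewrite sqr_shift Aid; apply/matrixP => i j; rewrite !mxE; ring.
Qed.

Lemma fwd2 : cc = w -> s != - cc%:R ->
  exists xx : algC, Bm *m Bm = xx%:M + (lam%:R - mu%:R) *: Bm + mu%:R *: J.
Proof.
move=> cw sc.
have Un := NNt_unit sc.
have mn : #|W| = #|T|.
  have := count_mw; rewrite cw => /eqP; rewrite eqn_mul2r; case/orP => /eqP //; lia.
set P := N^T *m N.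
have PU : P \in unitmx.
  rewrite -row_free_unit /row_free eqn_leq rank_leq_row /=.
  have U2 : N *m P *m N^T \in unitmx.
    have -> : N *m P *m N^T = (N *m N^T) *m (N *m N^T) by rewrite /P !mulmxA.
    by rewrite unitmx_mul Un.
  rewrite [X in (X <= _)%N]mn -{1}(mxrank_unit U2).
  exact: leq_trans (mxrankM_maxl _ _) (mxrankM_maxr _ _).
set p := lam%:R - mu%:R + cc%:R *+ 2 : algC.
set q := (k%:R - mu%:R - cc%:R ^+ 2 - cc%:R * lam%:R + cc%:R * mu%:R : algC).
have P3 : P *m (P *m P) = P *m (p *: P + q%:M + mu%:R *: J).
  have -> : P *m (P *m P) = N^T *m ((A + cc%:R%:M) *m (A + cc%:R%:M)) *m N.
    by rewrite -NNtc /P !mulmxA.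
  rewrite A'sq -NNtc !mulmxDr !mulmxDl -!scalemxAr -!scalemxAl mul_mx_scalar.
  rewrite -scalemxAl NtJN.
  have -> : N^T *m (N *m N^T) *m N = P *m P by rewrite /P !mulmxA.
  by rewrite mul_mx_scalar /P PJ -cw mulnn.
have P2 : P *m P = p *: P + q%:M + mu%:R *: J.
  by rewrite -(mulKmx PU (P *m P)) P3 mulKmx.
exists (p * w%:R + q - w%:R ^+ 2).
have PB : P = Bm + w%:R%:M by rewrite /P (NtN creg).
move: P2; rewrite PB sqr_shift => /(canRL (addrK _)) /(canRL (addrK _)) ->.
apply/matrixP => i j; rewrite !mxE /p cw; ring.
Qed.


Lemma Preal i j : (N^T *m N) i j \is Num.real.
Proof.
rewrite !mxE; apply: rpred_sum => l _; rewrite !mxE; apply: rpredM; exact: realn.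
Qed.

Lemma fwd1 : s = - cc%:R ->
  let t := lam%:R - mu%:R + cc%:R *+ 2 : algC in
  exists al : algC,
    Bm *m Bm = (t * w%:R - w%:R ^+ 2)%:M + (t - w%:R *+ 2) *: Bm + al *: J.
Proof.
move=> sc t.
have [kr ks rs] := distinct_krs.
have Qs := quad eig_s (ltac:(by rewrite eq_sym)); rewrite sc in Qs.
pose rho := lam%:R - mu%:R + cc%:R : algC.
have Zk : k%:R = mu%:R + cc%:R * rho.
  apply/eqP; rewrite -subr_eq0; apply/eqP.
  transitivity (((lam%:R - mu%:R) * (- cc%:R) + (k%:R - mu%:R)) - (- cc%:R) ^+ 2 : algC).
    rewrite /rho; ring.
  by rewrite Qs subrr.
have AY : (A + cc%:R%:M) *m (A - rho%:M) = mu%:R *: J.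
  rewrite mulmxDl !mulmxBr mul_mx_scalar mul_scalar_mx -scalar_mxM Aid.
  apply/matrixP => i j; rewrite !mxE Zk /rho; ring.
set P := N^T *m N.
set G := P *m P - t *: P.
have PG : P *m G = (mu * w ^ 2)%:R *: J.
  have -> : P *m G = N^T *m ((A + cc%:R%:M) *m (A - rho%:M)) *m N.
    have -> : A - rho%:M = N *m N^T - t%:M.
      by rewrite NNtc; apply/matrixP => i j; rewrite !mxE /t /rho mulr2n; ring.
    rewrite -NNtc [in RHS]mulmxBr [in RHS]mul_mx_scalar [in RHS]mulmxBr [in RHS]mulmxBl.
    rewrite /G /P mulmxBr -!scalemxAr -!scalemxAl !mulmxA.
    done.
  by rewrite AY -scalemxAr -scalemxAl NtJN scalerA -natrM.
have PJ' : P *m (const_mx 1 : 'M_(#|W|, #|W|)) = (cc * w)%:R *: J by rewrite /P PJ.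
pose ga := ((cc * w)%:R ^+ 2 - t * (cc * w)%:R : algC).
have GJ : G *m (const_mx 1 : 'M_(#|W|, #|W|)) = ga *: J.
  rewrite /G mulmxBl -mulmxA PJ' -scalemxAr PJ' -scalemxAl PJ' !scalerA -scalerBl.
  by rewrite /ga expr2.
pose D := (#|W|%:R : algC) *: G - ga *: J.
have DJ : D *m (const_mx 1 : 'M_(#|W|, #|W|)) = 0.
  by rewrite /D mulmxBl -!scalemxAl GJ mulJJ !scalerA mulrC subrr.
have m0 : (#|W|%:R : algC) != 0 by rewrite pnatr_eq0 -lt0n m_gt0.
have PD : P *m D = 0.
  pose be := (#|W|%:R * (mu * w ^ 2)%:R - ga * (cc * w)%:R : algC).
  have E : P *m D = be *: J.
    by rewrite /D mulmxBr -!scalemxAr PG PJ' !scalerA -scalerBl.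
  have : (P *m D) *m (const_mx 1 : 'M_(#|W|, #|W|)) = 0 by rewrite -mulmxA DJ mulmx0.
  rewrite E -scalemxAl mulJJ scalerA => /matrixP /(_ (Ordinal m_gt0) (Ordinal m_gt0)).
  rewrite !mxE mulr1 => /eqP; rewrite mulf_eq0 (negbTE m0) orbF => /eqP be0.
  by rewrite be0 scale0r.
have PT : P^T = P by rewrite /P Pt.
have DT : D^T = D.
  have trB p (X Y : 'M[algC]_p) : (X - Y)^T = X^T - Y^T by apply/matrixP => i j; rewrite !mxE.
  have trZ p (a : algC) (X : 'M[algC]_p) : (a *: X)^T = a *: X^T by apply/matrixP => i j; rewrite !mxE.
  by rewrite /D /G !trB !trZ trB trZ trmx_const trmx_mul PT.
have DP : D *m P = 0 by rewrite -DT -PT -trmx_mul PD trmx0.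
have DD : D *m D = 0.
  rewrite {2}/D mulmxBr -!scalemxAr DJ scaler0 subr0 /G mulmxBr -scalemxAr mulmxA DP.
  by rewrite mul0mx scaler0 subrr scaler0.
have Dr : forall i j, D i j \is Num.real.
  have tr : t \is Num.real.
    by rewrite /t; apply: rpredD; [apply: rpredB|apply: rpredMn]; apply: realn.
  have gr : ga \is Num.real.
    by rewrite /ga; apply: rpredB; [apply: rpredX|apply: rpredM]; rewrite ?realn.
  move=> i j; rewrite /D /G [X in X \is _]mxE [X in _ + X]mxE.
  apply: realB; last by rewrite !mxE mulr1.
  rewrite mxE; apply: rpredM; first exact: realn.
  rewrite mxE [X in _ + X]mxE; apply: realB; last by rewrite mxE; apply: rpredM => //; exact: Preal.
  rewrite mxE; apply: rpred_sum => l _; apply: rpredM; exact: Preal.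
have D0 := real_sym_sqr0 Dr DT DD.
have GE : G = (ga / #|W|%:R) *: J.
  move/eqP: D0; rewrite /D subr_eq0 => /eqP E.
  by rewrite -[G](scalerK m0) E scalerA mulrC.
exists (ga / #|W|%:R).
have PB : P = Bm + w%:R%:M by rewrite /P (NtN creg).
move: GE; rewrite /G PB sqr_shift => /(canRL (addrK _)) /(canRL (addrK _)) /(canRL (addrK _)) ->.
apply/matrixP => i j; rewrite !mxE mulr2n; ring.
Qed.


Lemma cc_ge2 : (2 <= cc)%N.
Proof. by have := cc_gt0; have := cc_neq1; case: cc => [|[|]]. Qed.

Lemma BmJk : Bm *m (const_mx 1 : 'M_(#|W|, #|W|)) = (cc * w - w)%N%:R *: J.
Proof. by rewrite BmJ natrB // leq_pmull // cc_gt0. Qed.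

Lemma Bm_diag i : (Bm *m Bm) i i = (cc * w - w)%N%:R.
Proof.
have := congr1 (fun M : 'M[algC]_#|W| => M i i) BmJk.
rewrite adjA_J adjA_sqr !mxE mulr1 => <-; congr (_%:R); apply: eq_card => Z.
by rewrite !inE [cgraph_rel Z _]cg_sym andbb.
Qed.

Lemma E1_of_s : s = - cc%:R -> (cc * cc + lam * cc + mu = k + mu * cc)%N.
Proof.
move=> sc.
have [kr ks rs] := distinct_krs.
have Qs := quad eig_s (ltac:(by rewrite eq_sym)); rewrite sc in Qs.
apply/eqP; rewrite -(eqr_nat algC) !natrD !natrM; apply/eqP.
apply/eqP; rewrite -subr_eq0; apply/eqP.
transitivity ((- cc%:R) ^+ 2 - ((lam%:R - mu%:R) * (- cc%:R) + (k%:R - mu%:R)) : algC).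
  ring.
by rewrite Qs subrr.
Qed.

Lemma fwd : s = - cc%:R \/ cc = w ->
  exists k' l' m' : nat, srgA W (@cgraph_rel T) k' l' m' /\ (k' = (cc * w - w)%N) /\
    (lam = (w - 2)%N -> [/\ l' = (cc - 2)%N, m' = (mu + w - cc)%N & (cc <= mu + w)%N]).
Proof.
move=> cond.
have [x [y [z [BB Hlam]]]] : exists x y z : algC,
   Bm *m Bm = x%:M + y *: Bm + z *: J /\
   (lam = (w - 2)%N -> [/\ y + z = (cc - 2)%N%:R, z = (mu + w - cc)%N%:R & (cc <= mu + w)%N]).
  case: (eqVneq s (- cc%:R)) => [sc|sc].
    have [al Hal] := fwd1 sc.
    set t := (lam%:R - mu%:R + cc%:R *+ 2 : algC) in Hal.
    exists (t * w%:R - w%:R ^+ 2), (t - w%:R *+ 2), al; split => // lw.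
    have E1 := E1_of_s sc.
    have mc : mu = cc.
      have c2 := cc_ge2; move: E1; rewrite kc lw.
      have : (2 <= w)%N := w2.
      case: (w) => [|[|w']] // _; case: (cc) c2 => [|[|c']] // _ E.
      apply/eqP; rewrite -(@eqn_pmul2l c'.+1) //; apply/eqP; nia.
    have diag : t * w%:R - w%:R ^+ 2 + al = (cc * w - w)%N%:R.
      have := congr1 (fun M : 'M[algC]_#|W| => M (Ordinal m_gt0) (Ordinal m_gt0)) Hal.
      by rewrite Bm_diag !mxE eqxx /= cg_irr mulr1n mulr0 addr0 mulr1 => ->.
    have wc : (w <= cc * w)%N by rewrite leq_pmull // cc_gt0.
    have c2 := cc_ge2.
    rewrite natrB // natrM in diag.
    have hal : al = w%:R.
      move: diag; rewrite /t lw mc natrB //; move=> /(canRL (addKr _)) ->; ring.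
    rewrite mc hal; split; last by lia.
    - rewrite /t lw mc natrB // natrB //; ring.
    - by rewrite addKn.
  case: cond => [/eqP|cw]; first by rewrite (negbTE sc).
  have [xx Hxx] := fwd2 cw sc.
  exists xx, (lam%:R - mu%:R), mu%:R; split => // lw.
  rewrite -cw addnK subrK lw cw; split => //; lia.
exists (cc * w - w)%N.
case: (eqVneq lam (w - 2)%N) => [lw|nlw].
  have [h1 h2 h3] := Hlam lw.
  exists (cc - 2)%N, (mu + w - cc)%N; split; last by split.
  apply: (mx_srgA cg_sym BmJk BB) => u v _ _ _ _ //.
have [l' [m' H]] := mx_srgA_ex cg_sym BmJk BB.
exists l', m'; split=> //; split=> // lw; by rewrite lw eqxx in nlw.
Qed.


Lemma w1_gt0 : (0 < w.-1)%N.
Proof. by case: (w) w2 => [|[|]]. Qed.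

Lemma kdiv (R : numFieldType) : (k%:R / (w.-1)%:R : R) = cc%:R.
Proof.
have w0 : (w.-1)%:R != 0 :> R by rewrite pnatr_eq0 -lt0n w1_gt0.
by rewrite kc natrM mulfK.
Qed.

Lemma cond_iff : (s = - (k%:R) / (w.-1)%:R \/ k = (w * w.-1)%N) <-> (s = - cc%:R \/ cc = w).
Proof.
rewrite mulNr kdiv; split; case=> H; [by left| |by left|]; right.
  by apply/eqP; rewrite -(@eqn_pmul2r w.-1) ?w1_gt0 // -kc H.
by rewrite kc H.
Qed.

Lemma main_sec :
  ((exists n' k' lam' mu' : nat, srg_on (wcliques e w) (@cgraph_rel T) n' k' lam' mu')
     <-> (s = - (k%:R) / (w.-1)%:R \/ k = (w * w.-1)%N))
  /\
  ((s = - (k%:R) / (w.-1)%:R \/ k = (w * w.-1)%N) ->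
   exists n' k' lam' mu' : nat,
     [/\ srg_on (wcliques e w) (@cgraph_rel T) n' k' lam' mu',
         (n'%:R : rat) = (n * k)%:R / (w * w.-1)%:R,
         (k'%:R : rat) = w%:R * (k%:R / (w.-1)%:R - 1) &
         (lam = (w - 2)%N ->
            (lam'%:R : rat) = k%:R / (w.-1)%:R - 2 /\
            (mu'%:R : rat) = mu%:R + w%:R - k%:R / (w.-1)%:R)]).
Proof.
rewrite cond_iff.
have part2 : s = - cc%:R \/ cc = w -> exists n' k' lam' mu' : nat,
     [/\ srg_on (wcliques e w) (@cgraph_rel T) n' k' lam' mu',
         (n'%:R : rat) = (n * k)%:R / (w * w.-1)%:R,
         (k'%:R : rat) = w%:R * (k%:R / (w.-1)%:R - 1) &
         (lam = (w - 2)%N ->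
            (lam'%:R : rat) = k%:R / (w.-1)%:R - 2 /\
            (mu'%:R : rat) = mu%:R + w%:R - k%:R / (w.-1)%:R)].
  move=> cond; have [k' [l' [m' [H [kk Hl]]]]] := fwd cond.
  rewrite kk in H; exists #|W|, (cc * w - w)%N, l', m'; split.
  - by apply/srg_onE; split.
  - have ww0 : (w * w.-1)%:R != 0 :> rat.
      by rewrite pnatr_eq0 muln_eq0 negb_or -!lt0n w1_gt0 andbT; case: (w) w2.
    have -> : (n * k = #|W| * (w * w.-1))%N by rewrite -nT kc mulnA -count_mw mulnA.
    by rewrite natrM mulfK.
  - by rewrite kdiv natrB ?leq_pmull ?cc_gt0 // natrM; ring.
  - move=> lw; have [-> -> h] := Hl lw; rewrite kdiv !natrB ?cc_ge2 // natrD; split => //.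
split; last exact: part2.
split; first exact: converse.
by move=> /part2 [n' [k' [l' [m' [H _ _ _]]]]]; exists n', k', l', m'.
Qed.

End Main.

Unset Implicit Arguments.

Theorem theorem9 (w : nat) (T : finType) (e : rel T) (n k lam mu : nat) (r s : algC) :
  (2 <= w)%N -> symmetric e -> irreflexive e ->
  clique_regular e w ->
  srg_on [set: T] e n k lam mu ->
  nonboring e ->
  (forall a : algC, adj_eigenvalue e a <-> (a = k%:R \/ a = r \/ a = s)) ->
  s < r ->
  ((exists n' k' lam' mu' : nat, srg_on (wcliques e w) (@cgraph_rel T) n' k' lam' mu')
     <-> (s = - (k%:R) / (w.-1)%:R \/ k = (w * w.-1)%N))
  /\
  ((s = - (k%:R) / (w.-1)%:R \/ k = (w * w.-1)%N) ->
   exists n' k' lam' mu' : nat,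
     [/\ srg_on (wcliques e w) (@cgraph_rel T) n' k' lam' mu',
         (n'%:R : rat) = (n * k)%:R / (w * w.-1)%:R,
         (k'%:R : rat) = w%:R * (k%:R / (w.-1)%:R - 1) &
         (lam = (w - 2)%N ->
            (lam'%:R : rat) = k%:R / (w.-1)%:R - 2 /\
            (mu'%:R : rat) = mu%:R + w%:R - k%:R / (w.-1)%:R)]).
Proof.
move=> w2 esym eirr creg srg nb spec sr.
exact: (main_sec w2 esym eirr creg srg nb spec sr).
Qed.
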